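(* The functor $\mathcal{M}\colon\mathbb{O}\to\mathbf{Set}$ preserves pullbacks.
   Context: Fix a set $Act$ of action labels, an infinite set $\mathcal{E}$ of event names and a set $S$ of places. An $Act$-labelled poset is $O=(X_O,\preccurlyeq_O,l_O)$, $X_O\subseteq\mathcal{E}$, with partial order $\preccurlyeq_O$ and $l_O\colon X_O\to Act$; $|O|=\{(x,l_O(x))\}$. Morphisms preserve order and labels (acting on labelled events by $\sigma(x_a)=\sigma(x)_a$); order-embeddings additionally reflect order. $\mathbb{O}$ is the category whose objects are chosen representatives of the isomorphism classes of finite $Act$-labelled posets (abstract posets) and whose morphisms are order-embeddings. For $K\subseteq|O|$, $K$ is down-closed if $y\in K$, $x\preccurlyeq_O y$ imply $x\in K$, and $\downarrow_O K=\{y\in|O|:\exists x\in K,\ y\preccurlyeq_O x\}$. A causal marking is a finite set $c$ of pairs $K\vdash s$ with $s\in S$ and $K$ a finite subset of $\mathcal{E}\times Act$; $c\sigma=\{\sigma(K)\vdash s\}$ and $\downarrow_O c=\{\downarrow_O K\vdash s: K\vdash s\in c\}$. $O\rhd c$ is a P-marking if every cause set of $c$ is a down-closed subset of $|O|$. The presheaf of P-markings $\mathcal{M}\colon\mathbb{O}\to\mathbf{Set}$ is $\mathcal{M}(O)=\{c: O\rhd c\text{ is a P-marking}\}$ and, for $\sigma\colon O\to O'$, $\mathcal{M}(\sigma)(c)=\downarrow_{O'}(c\sigma)$. *)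

(* Defs.v *)
From HB Require Import structures.
From mathcomp Require Import all_boot.
From mathcomp Require Export finmap.
Set Implicit Arguments. Unset Strict Implicit. Unset Printing Implicit Defensive.

Local Open Scope fset_scope.

Section PMarkings.
(* E : event names, Act : action labels, S : places. *)
Variables (E Act S : choiceType).

(* A (finite) Act-labelled poset: a finite set of events X_O ⊆ E, an order
   relation and a labelling; only their values on X_O matter. *)
Record lposet := LPoset { ev : {fset E}; ple : rel E; lab : E -> Act }.

Definition is_lposet (O : lposet) : Prop :=
  (forall x, x \in ev O -> ple O x x) /\
  (forall x y, x \in ev O -> y \in ev O -> ple O x y -> ple O y x -> x = y) /\
  (forall x y z, x \in ev O -> y \in ev O -> z \in ev O ->
     ple O x y -> ple O y z -> ple O x z).

Definition levents (O : lposet) : {fset (E * Act)} :=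
  [fset (x, lab O x) | x in ev O].

Definition is_morphism (O O' : lposet) (s : E -> E) : Prop :=
  (forall x, x \in ev O -> s x \in ev O') /\
  (forall x, x \in ev O -> lab O' (s x) = lab O x) /\
  (forall x y, x \in ev O -> y \in ev O -> ple O x y -> ple O' (s x) (s y)).

Definition is_embedding (O O' : lposet) (s : E -> E) : Prop :=
  is_morphism O O' s /\
  (forall x y, x \in ev O -> y \in ev O -> ple O' (s x) (s y) -> ple O x y).

Definition is_iso (O O' : lposet) : Prop :=
  exists s t : E -> E, [/\ is_embedding O O' s, is_embedding O' O t,
    (forall x, x \in ev O -> t (s x) = x) &
    (forall y, y \in ev O' -> s (t y) = y)].

Definition same_lposet (O O' : lposet) : Prop :=
  [/\ ev O = ev O',
      (forall x y, x \in ev O -> y \in ev O -> ple O x y = ple O' x y) &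
      (forall x, x \in ev O -> lab O x = lab O' x)].

(* Chosen is a choice of representatives of the isomorphism classes of finite
   Act-labelled posets: the objects of the category 𝕆. *)
Definition skeleton (Chosen : lposet -> Prop) : Prop :=
  [/\ (forall O, Chosen O -> is_lposet O),
      (forall P, is_lposet P -> exists O, Chosen O /\ is_iso P O) &
      (forall O1 O2, Chosen O1 -> Chosen O2 -> is_iso O1 O2 -> same_lposet O1 O2)].

Definition is_pullback_O (Chosen : lposet -> Prop) (A B C P : lposet)
  (f g p1 p2 : E -> E) : Prop :=
  [/\ Chosen A /\ Chosen B /\ Chosen C /\ Chosen P,
      is_embedding A C f /\ is_embedding B C g /\
      is_embedding P A p1 /\ is_embedding P B p2,
      (forall x, x \in ev P -> f (p1 x) = g (p2 x)) &
      (forall (Q : lposet) (q1 q2 : E -> E), Chosen Q ->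
         is_embedding Q A q1 -> is_embedding Q B q2 ->
         (forall x, x \in ev Q -> f (q1 x) = g (q2 x)) ->
         exists u : E -> E,
           [/\ is_embedding Q P u,
               (forall x, x \in ev Q -> p1 (u x) = q1 x),
               (forall x, x \in ev Q -> p2 (u x) = q2 x) &
               (forall u' : E -> E, is_embedding Q P u' ->
                  (forall x, x \in ev Q -> p1 (u' x) = q1 x) ->
                  (forall x, x \in ev Q -> p2 (u' x) = q2 x) ->
                  forall x, x \in ev Q -> u' x = u x)])].

(* causal markings: finite sets of pairs K ⊢ s *)
Definition marking := {fset ({fset (E * Act)} * S)}.

Definition lev_map (s : E -> E) (K : {fset (E * Act)}) : {fset (E * Act)} :=
  [fset (s p.1, p.2) | p in K].

Definition mark_map (s : E -> E) (c : marking) : marking :=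
  [fset (lev_map s p.1, p.2) | p in c].

Definition down_set (O : lposet) (K : {fset (E * Act)}) : {fset (E * Act)} :=
  [fset y in levents O |
     has (fun x => (x \in levents O) && ple O y.1 x.1) (enum_fset K)].

Definition down_mark (O : lposet) (c : marking) : marking :=
  [fset (down_set O p.1, p.2) | p in c].

Definition down_closed (O : lposet) (K : {fset (E * Act)}) : Prop :=
  K `<=` levents O /\
  (forall y x, y \in K -> x \in levents O -> ple O x.1 y.1 -> x \in K).

Definition P_marking (O : lposet) (c : marking) : Prop :=
  forall p, p \in c -> down_closed O p.1.

(* The presheaf ℳ : 𝕆 -> Set: on objects ℳ(O) = {c | O ▷ c P-marking}
   (as a subset of the type of markings), on morphisms ℳ(σ)(c) = ↓_{O'}(cσ). *)
Definition Mobj (O : lposet) : marking -> Prop := P_marking O.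
Definition Mmap (O' : lposet) (s : E -> E) (c : marking) : marking :=
  down_mark O' (mark_map s c).

(* The square of sets/functions
        mp2
    XP ----> XB
 mp1 |        | mg
     v        v
    XA ----> XC
        mf
   is a pullback in Set (functions considered on the given subsets). *)
Definition set_pullback (XA XB XP : marking -> Prop)
  (mf mg mp1 mp2 : marking -> marking) : Prop :=
  (forall c, XP c -> mf (mp1 c) = mg (mp2 c)) /\
  (forall (T : Type) (h1 h2 : T -> marking),
     (forall t, XA (h1 t)) -> (forall t, XB (h2 t)) ->
     (forall t, mf (h1 t) = mg (h2 t)) ->
     exists u : T -> marking,
       [/\ (forall t, XP (u t)),
           (forall t, mp1 (u t) = h1 t),
           (forall t, mp2 (u t) = h2 t) &
           (forall u' : T -> marking, (forall t, XP (u' t)) ->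
              (forall t, mp1 (u' t) = h1 t) ->
              (forall t, mp2 (u' t) = h2 t) ->
              forall t, u' t = u t)]).

End PMarkings.

(* Main.v *)
Require Import Defs.
From HB Require Import structures.
From mathcomp Require Import all_boot finmap.
Set Implicit Arguments. Unset Strict Implicit. Unset Printing Implicit Defensive.
Local Open Scope fset_scope.

Lemma in_levents (E Act : choiceType) (O : lposet E Act) y :
  (y \in levents O) = (y.1 \in ev O) && (y.2 == lab O y.1).
Proof.
apply/imfsetP/andP => [[x xO ->]|[yO /eqP e]] /=.
- by rewrite xO eqxx.
- by exists y.1 => //; case: y e yO => ? ? /= ->.
Qed.

Lemma in_downP (E Act : choiceType) (O : lposet E Act) (K : {fset (E * Act)}) y :
  reflect (y \in levents O /\ exists2 x, x \in K & (x \in levents O) && ple O y.1 x.1)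
    (y \in down_set O K).
Proof.
rewrite inE; apply: (iffP andP) => [[h /hasP [x xK hx]]|[h [x xK hx]]]; split=> //;
  [exists x|apply/hasP; exists x] => //.
Qed.

Lemma in_levmapP (E Act : choiceType) (s : E -> E) (K : {fset (E * Act)}) y :
  reflect (exists2 x, x \in K & y = (s x.1, x.2)) (y \in lev_map s K).
Proof. exact: imfsetP. Qed.
Arguments in_levmapP {E Act s K y}.
Notation LM := (@in_levmapP _ _ _ _ _).
Arguments in_downP {E Act O K y}.

Lemma levents_map (E Act : choiceType) (O O' : lposet E Act) s x :
  is_morphism O O' s -> x \in levents O -> (s x.1, x.2) \in levents O'.
Proof.
move=> [sev [slab _]]; rewrite !in_levents => /andP [x1 /eqP x2] /=.
by rewrite sev // slab // x2 eqxx.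
Qed.

Lemma Mmap_eq (E Act S : choiceType) (O' : lposet E Act) s (c : marking E Act S) :
  Mmap O' s c = [fset (down_set O' (lev_map s p.1), p.2) | p in c].
Proof.
apply/fsetP=> y; apply/imfsetP/imfsetP => /=.
- by move=> [q /imfsetP [/= p pc ->] ->]; exists p.
- move=> [p pc ->]; exists (lev_map s p.1, p.2) => //; apply/imfsetP; by exists p.
Qed.

Lemma imfset_inj_eq (T U : choiceType) (h : T -> U) (c c' : {fset T}) :
  {in c `|` c' &, injective h} -> [fset h p | p in c] = [fset h p | p in c'] -> c = c'.
Proof.
move=> hi e; apply/fsetP => x; apply/idP/idP => xc.
- have : h x \in [fset h p | p in c'] by rewrite -e; apply/imfsetP; exists x.
  case/imfsetP => /= y yc' hxy; rewrite (hi x y) // inE ?xc ?yc' ?orbT //.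
- have : h x \in [fset h p | p in c] by rewrite e; apply/imfsetP; exists x.
  case/imfsetP => /= y yc' hxy; rewrite (hi x y) // inE ?xc ?yc' ?orbT //.
Qed.

Lemma down_down (E Act : choiceType) (O O' : lposet E Act) s K :
  is_lposet O -> is_lposet O' -> is_morphism O O' s -> K `<=` levents O ->
  down_set O' (lev_map s (down_set O K)) = down_set O' (lev_map s K).
Proof.
move=> [rO [_ tO]] [rO' [_ tO']] sm KO; have [sev [slab sle]] := sm.
apply/fsetP=> y; apply/in_downP/in_downP.
- move=> [yO' [x /LM [z /in_downP [zO [k kK /andP [kO zk]]] ->] /andP [xO' yx]]].
  split=> //; exists (s k.1, k.2); first by apply/imfsetP; exists k.
  rewrite (levents_map sm kO) /=.
  move: kO zO yO'; rewrite !in_levents => /andP [k1 _] /andP [z1 _] /andP [y1 _].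
  apply: (tO' _ (s z.1)) => //; [exact: sev | exact: sev | exact: sle].
- move=> [yO' [x /LM [k kK ->] /andP [xO' yx]]]; split=> //.
  exists (s k.1, k.2); last by rewrite xO'.
  apply/imfsetP; exists k => //.
  apply/in_downP; split; first exact: (fsubsetP KO).
  exists k => //; rewrite (fsubsetP KO) //=; apply: rO.
  by move: (fsubsetP KO _ kK); rewrite in_levents => /andP [].
Qed.

Lemma levmap_comp (E Act : choiceType) (P : lposet E Act) (f g p1 p2 : E -> E) K :
  K `<=` levents P -> (forall x, x \in ev P -> f (p1 x) = g (p2 x)) ->
  lev_map f (lev_map p1 K) = lev_map g (lev_map p2 K).
Proof.
move=> KP e; have ev1 x : x \in K -> x.1 \in ev P.
  by move=> /(fsubsetP KP); rewrite in_levents => /andP [].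
apply/fsetP=> y; apply/imfsetP/LM.
- move=> [z /LM [k kK ->] ->] /=; exists (p2 k.1, k.2) => /=.
  + by apply/imfsetP; exists k.
  + by rewrite e // ev1.
- move=> [z /LM [k kK ->] ->] /=; exists (p1 k.1, k.2) => /=.
  + by apply/imfsetP; exists k.
  + by rewrite e // ev1.
Qed.

Lemma ev1 (E Act : choiceType) (O : lposet E Act) x : x \in levents O -> x.1 \in ev O.
Proof. by rewrite in_levents => /andP []. Qed.

Lemma F_sub (E Act : choiceType) (P A : lposet E Act) p1 K1 K2 :
  is_lposet A -> is_embedding P A p1 -> down_closed P K1 -> down_closed P K2 ->
  down_set A (lev_map p1 K1) = down_set A (lev_map p1 K2) -> K1 `<=` K2.
Proof.
move=> [rA _] [pm prefl] [K1P _] [K2P dc2] e.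
apply/fsubsetP => y yK1.
have yP := fsubsetP K1P _ yK1.
have : (p1 y.1, y.2) \in down_set A (lev_map p1 K1).
  apply/in_downP; split; first exact: levents_map pm yP.
  exists (p1 y.1, y.2); first by apply/imfsetP; exists y.
  rewrite (levents_map pm yP) /=; apply: rA; have [h1 _] := pm; apply: h1; exact: ev1 yP.
rewrite e => /in_downP [_ [x /LM [k kK ->] /andP [_ /= hle]]].
apply: (dc2 k y kK yP); apply: prefl hle; [exact: ev1 yP | exact: ev1 (fsubsetP K2P _ kK)].
Qed.

Lemma F_inj (E Act : choiceType) (P A : lposet E Act) p1 K1 K2 :
  is_lposet A -> is_embedding P A p1 -> down_closed P K1 -> down_closed P K2 ->
  down_set A (lev_map p1 K1) = down_set A (lev_map p1 K2) -> K1 = K2.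
Proof.
move=> lA em d1 d2 e; apply/eqP; rewrite eqEfsubset.
by rewrite (F_sub lA em d1 d2 e) (F_sub lA em d2 d1 (esym e)).
Qed.

Lemma levents_eq (E Act : choiceType) (O : lposet E Act) x y :
  x \in levents O -> y \in levents O -> x.1 = y.1 -> x = y.
Proof.
rewrite !in_levents => /andP [_ /eqP ex] /andP [_ /eqP ey] e1.
by case: x y ex ey e1 => [x1 x2] [y1 y2] /= -> -> ->.
Qed.

Lemma self_in (E Act : choiceType) (O O' : lposet E Act) s K k :
  is_lposet O' -> is_morphism O O' s -> K `<=` levents O -> k \in K ->
  (s k.1, k.2) \in down_set O' (lev_map s K).
Proof.
move=> [rO' _] sm KO kK; have kO := fsubsetP KO _ kK.
apply/in_downP; split; first exact: levents_map sm kO.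
exists (s k.1, k.2); first by apply/imfsetP; exists k.
rewrite (levents_map sm kO) /=; apply: rO'; have [h1 _] := sm; apply: h1; exact: ev1 kO.
Qed.

Lemma chain (E Act : choiceType) (A B C : lposet E Act) f g K K' :
  is_lposet A -> is_lposet C -> is_embedding A C f -> is_embedding B C g ->
  down_closed A K -> down_closed B K' ->
  down_set C (lev_map f K) = down_set C (lev_map g K') ->
  forall y, y \in K -> exists a, exists2 b, a \in K /\ b \in K' & ple A y.1 a.1 /\ f a.1 = g b.1.
Proof.
move=> [rA [aA tA]] lC [fm fr] [gm gr] [KA _] [K'B _] e.
have [rC [aC tC]] := lC.
have [fev _] := fm; have [gev _] := gm.
suff H : forall n a, a \in K -> (#|` [fset z in K | ple A a.1 z.1]| < n)%N ->
  exists a', exists2 b, a' \in K /\ b \in K' & ple A a.1 a'.1 /\ f a'.1 = g b.1.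
  by move=> y yK; exact: (H _ y yK (ltnSn _)).
elim=> // n IH a aK hn.
have := self_in lC fm KA aK; rewrite e => /in_downP [_ [x /LM [b bK' ->] /andP [_ /= hab]]].
have := self_in lC gm K'B bK'; rewrite -e => /in_downP [_ [x' /LM [a' aK' ->] /andP [_ /= hba]]].
have aL := fsubsetP KA _ aK; have a'L := fsubsetP KA _ aK'; have bL := fsubsetP K'B _ bK'.
have a1 := ev1 aL; have a'1 := ev1 a'L; have b1 := ev1 bL.
have haa' : ple A a.1 a'.1.
  by apply: fr => //; apply: (tC _ (g b.1)) => //; [exact: fev|exact: gev|exact: fev].
case: (eqVneq a' a) => [ea'|na'].
  exists a; exists b; first by split.
  split; first exact: rA.
  by apply: aC => //; [exact: fev|exact: gev|rewrite ea' in hba].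
have hlt : (#|` [fset z in K | ple A a'.1 z.1]| < n)%N.
rewrite -ltnS; apply: leq_trans hn; apply: fproper_ltn_card.
  rewrite fproperEneq; apply/andP; split.
    apply/eqP => eq; have : a \in [fset z in K | ple A a.1 z.1] by rewrite !inE /=; apply/andP; split; [exact: aK | exact: rA].
    rewrite -eq inE => /andP [_ h]; move/eqP: na'; apply; apply: (@levents_eq _ _ A) => //.
    exact: (aA _ _ a'1 a1 h haa').
  apply/fsubsetP => z; rewrite !inE /= => /andP [zK hz]; apply/andP; split; first exact: zK.
  by apply: (tA _ a'.1) => //; exact: ev1 (fsubsetP KA _ zK).
have [a'' [b'' [h1 h2] [h3 h4]]] := IH a' aK' hlt.
  exists a''; exists b''; first by split.
  split => //.
  by apply: (tA _ a'.1) => //; exact: ev1 (fsubsetP KA _ h1).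
Qed.

Lemma pb_point (E Act : choiceType) (Chosen : lposet E Act -> Prop) (A B C P : lposet E Act)
  (f g p1 p2 : E -> E) a b :
  skeleton Chosen -> is_pullback_O Chosen A B C P f g p1 p2 ->
  a \in ev A -> b \in ev B -> f a = g b ->
  exists2 p, p \in ev P & p1 p = a /\ p2 p = b.
Proof.
move=> [chl chex _] [[cA [cB [cC cP]]] [[fm _] [[gm _] _]] _ univ] aA bB e.
have [rA _] := chl A cA.
have [rB _] := chl B cB.
pose O1 := @LPoset E Act [fset a] (fun _ _ => true) (fun _ => lab A a).
have lO1 : is_lposet O1.
  split; first by [].
  split; last by [].
  by move=> x y; rewrite /O1 /= !inE => /eqP -> /eqP ->.
have [Q [cQ [s [t [[sm _] [tm _] ts st]]]]] := chex O1 lO1.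
have [rQ _] := chl Q cQ.
have [tev [tlab _]] := tm.
have evQ : forall x, x \in ev Q -> x = s a.
  move=> x xQ; have := tev x xQ; rewrite /O1 /= inE => /eqP tx.
  by rewrite -(st x xQ) tx.
have labQ : forall x, x \in ev Q -> lab Q x = lab A a.
  by move=> x xQ; rewrite -(tlab x xQ).
have saQ : s a \in ev Q by have [sev _] := sm; apply: sev; rewrite /O1 /= inE.
have labb : lab B b = lab A a.
  have [_ [fl _]] := fm; have [_ [gl _]] := gm.
  by rewrite -(gl b bB) -e fl.
have q1e : is_embedding Q A (fun _ => a).
  split; [split; [by [] | split; [by move=> x xQ; rewrite labQ | by move=> *; apply: rA]] |].
  by move=> x y xQ yQ _; rewrite (evQ x xQ) (evQ y yQ); exact: rQ.
have q2e : is_embedding Q B (fun _ => b).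
  split; [split; [by [] | split; [by move=> x xQ; rewrite labQ | by move=> *; apply: rB]] |].
  by move=> x y xQ yQ _; rewrite (evQ x xQ) (evQ y yQ); exact: rQ.
have [u [uP h1 h2 _]] := univ Q (fun _ => a) (fun _ => b) cQ q1e q2e (fun _ _ => e).
exists (u (s a)); first by have [[uev _] _] := uP; apply: uev.
by split; [apply: h1 | apply: h2].
Qed.

Lemma in_sep (T : choiceType) (X : {fset T}) (Q : pred T) y :
  (y \in [fset z in X | Q z]) = (y \in X) && Q y.
Proof. by rewrite !inE. Qed.

Lemma imfset2 (T U V : choiceType) (h : U -> V) (h' : T -> U) (c : {fset T}) :
  [fset h p | p in [fset h' p | p in c]] = [fset h (h' p) | p in c].
Proof.
apply/fsetP=> y; apply/imfsetP/imfsetP => /=.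
- by move=> [q /imfsetP [/= p pc ->] ->]; exists p.
- by move=> [p pc ->]; exists (h' p) => //; apply/imfsetP; exists p.
Qed.

Lemma pt_eq (E Act : choiceType) (P A : lposet E Act) p1 p (a : E * Act) :
  is_morphism P A p1 -> p \in ev P -> a \in levents A -> p1 p = a.1 -> (p1 p, lab P p) = a.
Proof.
move=> pm pP aA e; apply: (@levents_eq _ _ A) => //.
apply: (levents_map (x := (p, lab P p)) pm).
by rewrite in_levents /= pP eqxx.
Qed.

Lemma KP_closed (E Act : choiceType) (P A : lposet E Act) p1 K :
  is_morphism P A p1 -> down_closed A K ->
  down_closed P [fset y in levents P | (p1 y.1, y.2) \in K].
Proof.
move=> pm [KA dc]; split.
  by apply/fsubsetP => y; rewrite in_sep => /andP [].
move=> y x; rewrite !in_sep => /andP [yP yK] xP hle; rewrite xP /=.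
apply: (dc _ _ yK (levents_map pm xP)) => /=.
have [_ [_ ple]] := pm; apply: ple => //; exact: ev1.
Qed.

Lemma key (E Act : choiceType) (Chosen : lposet E Act -> Prop) (A B C P : lposet E Act)
  (f g p1 p2 : E -> E) K K' :
  skeleton Chosen -> is_pullback_O Chosen A B C P f g p1 p2 ->
  down_closed A K -> down_closed B K' ->
  down_set C (lev_map f K) = down_set C (lev_map g K') ->
  down_set A (lev_map p1 [fset y in levents P | (p1 y.1, y.2) \in K]) = K /\
  down_set B (lev_map p2 [fset y in levents P | (p1 y.1, y.2) \in K]) = K'.
Proof.
move=> HC pb dK dK' e.
have [[cA [cB [cC cP]]] [[fm fr] [[gm gr] [[p1m p1r] [p2m p2r]]]] comm _] := pb.
have [chl _ _] := HC.
have lA := chl A cA; have lB := chl B cB; have lC := chl C cC; have lP := chl P cP.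
have [KA dcK] := dK; have [K'B dcK'] := dK'.
have [_ [p1l _]] := p1m; have [_ [p2l _]] := p2m.
split; apply/fsetP => y; apply/idP/idP.
- move=> /in_downP [yA [x /LM [k] /[!in_sep] /andP [kP kK] -> /andP [_ /= hle]]].
  exact: (dcK _ _ kK yA hle).
- move=> yK; have [a [b [aK bK'] [ya fab]]] := chain lA lC (conj fm fr) (conj gm gr) dK dK' e yK.
  have aL := fsubsetP KA _ aK; have bL := fsubsetP K'B _ bK'.
  have [p pP [pa pb2]] := pb_point HC pb (ev1 aL) (ev1 bL) fab.
  have pe := pt_eq p1m pP aL pa.
  apply/in_downP; split; first exact: (fsubsetP KA).
  exists (p1 p, lab P p).
    apply/imfsetP; exists (p, lab P p) => //.
    by rewrite in_sep /= in_levents /= pP eqxx /= pe.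
  by rewrite pe aL /=.
- move=> /in_downP [yB [x /LM [k] /[!in_sep] /andP [kP kK] -> /andP [_ /= hle]]].
  apply: (dcK' (p2 k.1, k.2) y _ yB hle).
  have := self_in lC fm KA kK; rewrite e => /in_downP [_ [x' /LM [b bK' ->] /andP [_ /= hb]]].
  apply: (dcK' _ _ bK' (levents_map p2m kP)) => /=.
  rewrite comm in hb; last exact: ev1.
  apply: gr => //; [by have [h _] := p2m; apply: h; exact: ev1 | exact: ev1 (fsubsetP K'B _ bK')].
- move=> yK'; have [b [a [bK' aK] [yb gba]]] := chain lB lC (conj gm gr) (conj fm fr) dK' dK (esym e) yK'.
  have aL := fsubsetP KA _ aK; have bL := fsubsetP K'B _ bK'.
  have [p pP [pa pb2]] := pb_point HC pb (ev1 aL) (ev1 bL) (esym gba).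
  have pe := pt_eq p1m pP aL pa.
  have pe2 := pt_eq p2m pP bL pb2.
  apply/in_downP; split; first exact: (fsubsetP K'B).
  exists (p2 p, lab P p).
    apply/imfsetP; exists (p, lab P p) => //.
    by rewrite in_sep /= in_levents /= pP eqxx /= pe.
  by rewrite pe2 bL /=.
Qed.

Unset Implicit Arguments.

Theorem lemma4 (E Act S : choiceType)
  (E_infinite : forall X : {fset E}, exists e : E, e \notin X)
  (Chosen : lposet E Act -> Prop) (HChosen : skeleton Chosen)
  (A B C P : lposet E Act) (f g p1 p2 : E -> E) :
  is_pullback_O Chosen A B C P f g p1 p2 ->
  set_pullback (@Mobj E Act S A) (@Mobj E Act S B) (@Mobj E Act S P)
    (@Mmap E Act S C f) (@Mmap E Act S C g)
    (@Mmap E Act S A p1) (@Mmap E Act S B p2).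
Proof.
move=> pb.
have [[cA [cB [cC cP]]] [[fm fr] [[gm gr] [[p1m p1r] [p2m p2r]]]] comm _] := pb.
have [chl _ _] := HChosen.
have lA := chl A cA; have lB := chl B cB; have lC := chl C cC; have lP := chl P cP.
split.
  move=> c cPm; rewrite !Mmap_eq !imfset2; apply: eq_in_imfset => q qc /=.
  have [qP _] := cPm q qc.
  have m1 : lev_map p1 q.1 `<=` levents A.
    by apply/fsubsetP => x /LM [k kq ->]; apply: (levents_map p1m); exact: (fsubsetP qP).
  have m2 : lev_map p2 q.1 `<=` levents B.
    by apply/fsubsetP => x /LM [k kq ->]; apply: (levents_map p2m); exact: (fsubsetP qP).
  rewrite (down_down lA lC fm m1) (down_down lB lC gm m2).
  by rewrite (levmap_comp qP comm).
move=> T h1 h2 H1 H2 H12.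
pose cPm0 (c : marking E Act S) : marking E Act S := [fset ([fset y in levents P | (p1 y.1, y.2) \in (p.1 : {fset (E * Act)})], p.2) | p in c].
have partner : forall t p, p \in h1 t -> exists2 q, q \in h2 t &
    down_set C (lev_map f p.1) = down_set C (lev_map g q.1) /\ p.2 = q.2.
  move=> t p pc; have := H12 t; rewrite !Mmap_eq => e.
  have : (down_set C (lev_map f p.1), p.2) \in [fset (down_set C (lev_map f p0.1), p0.2) | p0 in h1 t].
    by apply/imfsetP; exists p.
  by rewrite e => /imfsetP [q qc [e1 e2]]; exists q.
have partner' : forall t q, q \in h2 t -> exists2 p, p \in h1 t &
    down_set C (lev_map f p.1) = down_set C (lev_map g q.1) /\ p.2 = q.2.
  move=> t q qc; have := H12 t; rewrite !Mmap_eq => e.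
  have : (down_set C (lev_map g q.1), q.2) \in [fset (down_set C (lev_map g p0.1), p0.2) | p0 in h2 t].
    by apply/imfsetP; exists q.
  by rewrite -e => /imfsetP [p pc [e1 e2]]; exists p.
have HP : forall t, Mobj P (cPm0 (h1 t)).
  move=> t q; rewrite /cPm0; case/imfsetP => p pc -> /=; apply: KP_closed p1m _; exact: (H1 t p pc).
have Hb : forall t, Mmap A p1 (cPm0 (h1 t)) = h1 t.
  move=> t; rewrite Mmap_eq imfset2; apply/fsetP => q; apply/imfsetP/idP => /=.
  - move=> [p pc ->]; have [q' q'c [e1 _]] := partner t p pc.
    have [-> _] := key HChosen pb (H1 t p pc) (H2 t q' q'c) e1.
    by case: p pc {e1}.
  - move=> qc; exists q => //; have [q' q'c [e1 _]] := partner t q qc.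
    have [-> _] := key HChosen pb (H1 t q qc) (H2 t q' q'c) e1.
    by case: q {qc e1 q'c}.
have Hc : forall t, Mmap B p2 (cPm0 (h1 t)) = h2 t.
  move=> t; rewrite Mmap_eq imfset2; apply/fsetP => q; apply/imfsetP/idP => /=.
  - move=> [p pc ->]; have [q' q'c [e1 e2]] := partner t p pc.
    have [_ ->] := key HChosen pb (H1 t p pc) (H2 t q' q'c) e1.
    by rewrite e2; case: q' q'c {e1 e2}.
  - move=> qc; have [p pc [e1 e2]] := partner' t q qc; exists p => //.
    have [_ ->] := key HChosen pb (H1 t p pc) (H2 t q qc) e1.
    by rewrite e2; case: q {qc e1 e2}.
exists (fun t => cPm0 (h1 t)); split => //.
move=> u' Hu' Hu1 _ t.
have e : Mmap A p1 (u' t) = Mmap A p1 (cPm0 (h1 t)) by rewrite Hu1 Hb.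
move: e; rewrite !Mmap_eq; apply: imfset_inj_eq => x y.
rewrite !inE => xin yin [e1 e2].
have dx : down_closed P x.1 by case/orP: xin => [/(Hu' t)|/(HP t)]; apply.
have dy : down_closed P y.1 by case/orP: yin => [/(Hu' t)|/(HP t)]; apply.
have := F_inj lA (conj p1m p1r) dx dy e1.
by case: x y {xin yin e1 dx dy} e2 => [x1 x2] [y1 y2] /= -> ->.
Qed.
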